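(* Let $(A,\mathcal N,\mathcal P,\lambda)$ be a game. Let $A^\perp$ be the event structure with the same events, order and conflict as $A$ but with every polarity reversed. Equip $A^\perp$ with the group $\mathcal N_{A^\perp}:=\mathcal P$ (acting on events as on $A$), the group $\mathcal P_{A^\perp}:=\mathcal N$ (acting on events as on $A$), and the function $\lambda_{A^\perp}:\mathcal P\times\mathcal N\to\mathcal N\times\mathcal P$ defined as the composite $\mathit{isw}\circ\lambda\circ\mathit{isw}$, where $\mathit{isw}$ denotes the invert-and-swap maps $\mathcal P\times\mathcal N\to\mathcal N\times\mathcal P$, $(\beta,\alpha)\mapsto(\alpha^{-1},\beta^{-1})$, and $\mathcal N\times\mathcal P\to\mathcal P\times\mathcal N$, $(\alpha,\beta)\mapsto(\beta^{-1},\alpha^{-1})$. Explicitly, $\lambda_{A^\perp}(\beta,\alpha)=(\alpha'^{-1},\beta'^{-1})$ where $(\beta',\alpha')=\lambda(\alpha^{-1},\beta^{-1})$. Then $(A^\perp,\mathcal P,\mathcal N,\lambda_{A^\perp})$ is a game (the dual of $A$).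
   Context: An event structure (with polarity) is a set $A$ with a partial order $\leq$ such that every element has finitely many elements below it, an irreflexive symmetric relation $\#$ (conflict) that is hereditary (if $a\leq a'$ and $a\# b$ then $a'\# b$), and a polarity function $A\to\{-,+\}$. A configuration is a finite $\leq$-down-closed subset containing no two elements in conflict; $\mathrm{Conf}(A)$ is the set of configurations. For $x,y\in\mathrm{Conf}(A)$, $x\subseteq^+y$ (resp. $x\subseteq^-y$) means $x\subseteq y$ and all elements of $y\setminus x$ are positive (resp. negative). An automorphism of $A$ is a bijection $A\to A$ preserving and reflecting $\leq$, $\#$ and polarity. An automorphism $\alpha$ fixes $x\in\mathrm{Conf}(A)$ if $\alpha(a)=a$ for all $a\in x$. An automorphism $\alpha$ is negative if whenever $\alpha$ fixes $x\in\mathrm{Conf}(A)$ and $x\subseteq^+y\in\mathrm{Conf}(A)$, $\alpha$ fixes $y$; it is positive if the same holds with $\subseteq^-$ in place of $\subseteq^+$. An action of a group $G$ on $A$ is a group homomorphism from $G$ to the automorphism group of $A$ (we write $g(a)$ for the action); it is negative (resp. positive) if every element acts by a negative (resp. positive) automorphism. A game is a tuple $(A,\mathcal N,\mathcal P,\lambda)$ where $A$ is an event structure, $\mathcal N$ is a group with a negative action on $A$, $\mathcal P$ is a group with a positive action on $A$, and $\lambda:\mathcal N\times\mathcal P\to\mathcal P\times\mathcal N$ is a function satisfying, for all $\alpha,\alpha'\in\mathcal N$, $\beta,\beta'\in\mathcal P$ (with $e$ the units): (i) $\lambda(e,\beta)=(\beta,e)$ and $\lambda(\alpha,e)=(e,\alpha)$;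 (ii) if $\lambda(\alpha',\beta)=(\beta_1,\alpha_1)$ and $\lambda(\alpha,\beta_1)=(\beta_2,\alpha_2)$ then $\lambda(\alpha\alpha',\beta)=(\beta_2,\alpha_2\alpha_1)$; (iii) if $\lambda(\alpha,\beta)=(\beta_1,\alpha_1)$ and $\lambda(\alpha_1,\beta')=(\beta_2,\alpha_2)$ then $\lambda(\alpha,\beta\beta')=(\beta_1\beta_2,\alpha_2)$; (iv) if $\lambda(\alpha,\beta)=(\beta',\alpha')$ then $\alpha(\beta(a))=\beta'(\alpha'(a))$ for all $a\in A$. (Conditions (i)–(iii) say $\lambda$ is a distributive law between the monads $\mathcal N\times(-)$ and $\mathcal P\times(-)$ on $\mathbf{Set}$.) *)

(* Defs.v *)
From Stdlib Require Import List.



Inductive polarity := Neg | Pos.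
Definition flip (p : polarity) : polarity := match p with Neg => Pos | Pos => Neg end.

Record Group := {
  gcar :> Type;
  gmul : gcar -> gcar -> gcar;
  gone : gcar;
  ginv : gcar -> gcar;
  gmulA : forall x y z, gmul x (gmul y z) = gmul (gmul x y) z;
  gmul1l : forall x, gmul gone x = x;
  gmul1r : forall x, gmul x gone = x;
  gmulVl : forall x, gmul (ginv x) x = gone;
  gmulVr : forall x, gmul x (ginv x) = gone
}.
Arguments gmul {g}.
Arguments gone {g}.
Arguments ginv {g}.

Record ESdata := {
  ev : Type;
  leq_ev : ev -> ev -> Prop;
  cf : ev -> ev -> Prop;
  pol : ev -> polarity
}.

Definition is_event_structure (A : ESdata) : Prop :=
  (forall a, leq_ev A a a) /\
  (forall a b, leq_ev A a b -> leq_ev A b a -> a = b) /\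
  (forall a b c, leq_ev A a b -> leq_ev A b c -> leq_ev A a c) /\
  (forall a, exists l : list (ev A), forall b, leq_ev A b a <-> In b l) /\
  (forall a, ~ cf A a a) /\
  (forall a b, cf A a b -> cf A b a) /\
  (forall a a' b, leq_ev A a a' -> cf A a b -> cf A a' b).

Definition dual (A : ESdata) : ESdata :=
  {| ev := ev A; leq_ev := leq_ev A; cf := cf A; pol := fun a => flip (pol A a) |}.

Definition is_config (A : ESdata) (x : ev A -> Prop) : Prop :=
  (exists l : list (ev A), forall a, x a <-> In a l) /\
  (forall a b, leq_ev A a b -> x b -> x a) /\
  (forall a b, x a -> x b -> ~ cf A a b).

Definition subset_pol (A : ESdata) (p : polarity) (x y : ev A -> Prop) : Prop :=
  (forall a, x a -> y a) /\ (forall a, y a -> ~ x a -> pol A a = p).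

Definition is_automorphism (A : ESdata) (f : ev A -> ev A) : Prop :=
  (forall a b, f a = f b -> a = b) /\
  (forall b, exists a, f a = b) /\
  (forall a b, leq_ev A a b <-> leq_ev A (f a) (f b)) /\
  (forall a b, cf A a b <-> cf A (f a) (f b)) /\
  (forall a, pol A (f a) = pol A a).

Definition fixes (A : ESdata) (f : ev A -> ev A) (x : ev A -> Prop) : Prop :=
  forall a, x a -> f a = a.

Definition auto_closed (A : ESdata) (p : polarity) (f : ev A -> ev A) : Prop :=
  is_automorphism A f /\
  forall x y, is_config A x -> is_config A y ->
    fixes A f x -> subset_pol A p x y -> fixes A f y.

Definition negative_automorphism (A : ESdata) (f : ev A -> ev A) : Prop :=
  auto_closed A Pos f.
Definition positive_automorphism (A : ESdata) (f : ev A -> ev A) : Prop :=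
  auto_closed A Neg f.

Definition is_action (A : ESdata) (G : Group) (act : G -> ev A -> ev A) : Prop :=
  (forall g, is_automorphism A (act g)) /\
  (forall a, act gone a = a) /\
  (forall g h a, act (gmul g h) a = act g (act h a)).

Definition negative_action (A : ESdata) (G : Group) (act : G -> ev A -> ev A) : Prop :=
  is_action A G act /\ forall g, negative_automorphism A (act g).
Definition positive_action (A : ESdata) (G : Group) (act : G -> ev A -> ev A) : Prop :=
  is_action A G act /\ forall g, positive_automorphism A (act g).

Definition is_game (A : ESdata) (N P : Group)
    (actN : N -> ev A -> ev A) (actP : P -> ev A -> ev A)
    (lam : N * P -> P * N) : Prop :=
  is_event_structure A /\
  negative_action A N actN /\
  positive_action A P actP /\
  (forall b : P, lam (gone, b) = (b, gone)) /\
  (forall a : N, lam (a, gone) = (gone, a)) /\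
  (forall (a a' : N) (b : P) b1 a1 b2 a2,
     lam (a', b) = (b1, a1) -> lam (a, b1) = (b2, a2) ->
     lam (gmul a a', b) = (b2, gmul a2 a1)) /\
  (forall (a : N) (b b' : P) b1 a1 b2 a2,
     lam (a, b) = (b1, a1) -> lam (a1, b') = (b2, a2) ->
     lam (a, gmul b b') = (gmul b1 b2, a2)) /\
  (forall (a : N) (b : P) b' a',
     lam (a, b) = (b', a') -> forall e, actN a (actP b e) = actP b' (actN a' e)).

Definition isw {G H : Group} (p : G * H) : H * G :=
  (ginv (snd p), ginv (fst p)).

Definition dual_lambda (N P : Group) (lam : N * P -> P * N) : P * N -> N * P :=
  fun p => isw (lam (isw p)).

(* Main.v *)
Require Import Defs.

Section G.
Variable G : Group.
Lemma inv_uniq (x y : G) : gmul x y = gone -> y = ginv x.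
Proof.
  intro H. rewrite <- (gmul1l G y), <- (gmulVl G x), <- gmulA, H, gmul1r. reflexivity.
Qed.
Lemma ginv_one : ginv (gone : G) = gone.
Proof. symmetry. apply inv_uniq. apply gmul1l. Qed.
Lemma ginvK (x : G) : ginv (ginv x) = x.
Proof. symmetry. apply inv_uniq. apply gmulVl. Qed.
Lemma ginvM (x y : G) : ginv (gmul x y) = gmul (ginv y) (ginv x).
Proof.
  symmetry. apply inv_uniq.
  rewrite <- gmulA, (gmulA G y), gmulVr, gmul1l, gmulVr. reflexivity.
Qed.
End G.

Lemma dual_auto A f : is_automorphism A f -> is_automorphism (dual A) f.
Proof.
  intros (H1 & H2 & H3 & H4 & H5). repeat split; auto.
  - apply H3. - apply H3. - apply H4. - apply H4.
  - intro a. simpl. rewrite H5. reflexivity.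
Qed.

Lemma dual_closed A p f : auto_closed A (flip p) f -> auto_closed (dual A) p f.
Proof.
  intros [Ha Hc]. split; [apply dual_auto; exact Ha|].
  intros x y Hx Hy Hf [S1 S2]. apply (Hc x y Hx Hy Hf). split; auto.
  intros a Hya Hxa. specialize (S2 a Hya Hxa). simpl in S2.
  destruct p, (pol A a); simpl in *; congruence.
Qed.

Lemma dual_action A G act : is_action A G act -> is_action (dual A) G act.
Proof.
  intros (H1 & H2 & H3). split; [|split]; auto. intro g. apply dual_auto, H1.
Qed.

Lemma act_inv A G act (H : is_action A G act) (g : G) x : act (ginv g) (act g x) = x.
Proof.
  destruct H as (_ & H2 & H3). rewrite <- H3, gmulVl. apply H2.
Qed.

Lemma act_inv' A G act (H : is_action A G act) (g : G) x : act g (act (ginv g) x) = x.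
Proof.
  pose proof (act_inv A G act H (ginv g) x) as K. rewrite ginvK in K. exact K.
Qed.

Theorem mainTheorem1 (A : ESdata) (N P : Group)
    (actN : N -> ev A -> ev A) (actP : P -> ev A -> ev A)
    (lam : N * P -> P * N) :
  is_game A N P actN actP lam ->
  is_game (dual A) P N actP actN (dual_lambda N P lam).
Proof.
  intros (Hes & [HNa HNn] & [HPa HPp] & Hi1 & Hi2 & Hii & Hiii & Hiv).
  unfold dual_lambda, isw; simpl.
  split; [exact Hes|].
  split; [split; [apply dual_action; exact HPa| intro g; apply dual_closed, HPp]|].
  split; [split; [apply dual_action; exact HNa| intro g; apply dual_closed, HNn]|].
  split.
  { intro b. rewrite ginv_one, Hi2. simpl. rewrite ginvK, ginv_one. reflexivity. }
  split.
  { intro a. rewrite ginv_one, Hi1. simpl. rewrite ginvK, ginv_one. reflexivity. }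
  split.
  { intros a a' b b1 a1 b2 a2 E1 E2. cbn [fst snd] in *.
    destruct (lam (ginv b, ginv a')) as [x1 y1] eqn:L1. cbn [fst snd] in E1.
    injection E1 as <- <-. rewrite ginvK in E2.
    destruct (lam (y1, ginv a)) as [x2 y2] eqn:L2. cbn [fst snd] in E2.
    injection E2 as <- <-.
    rewrite ginvM, (Hiii _ _ _ _ _ _ _ L1 L2). cbn [fst snd].
    rewrite ginvM. reflexivity. }
  split.
  { intros a b b' b1 a1 b2 a2 E1 E2. cbn [fst snd] in *.
    destruct (lam (ginv b, ginv a)) as [x1 y1] eqn:L1. cbn [fst snd] in E1.
    injection E1 as <- <-. rewrite ginvK in E2.
    destruct (lam (ginv b', x1)) as [x2 y2] eqn:L2. cbn [fst snd] in E2.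
    injection E2 as <- <-.
    rewrite ginvM, (Hii _ _ _ _ _ _ _ L1 L2). cbn [fst snd].
    rewrite ginvM. reflexivity. }
  { intros a b b' a' E e. cbn [fst snd] in *.
    destruct (lam (ginv b, ginv a)) as [x y] eqn:L. cbn [fst snd] in E.
    injection E as <- <-. rewrite ?ginvK.
    pose proof (Hiv _ _ _ _ L (actN (ginv y) (actP (ginv x) e))) as K.
    rewrite (act_inv' _ _ _ HNa), (act_inv' _ _ _ HPa) in K.
    rewrite <- K at 1. rewrite (act_inv' _ _ _ HNa b), (act_inv' _ _ _ HPa a). reflexivity. }
Qed.
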